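(* Let $I$ be an ideal of a ring $R$ with $Nil(R)\subseteq I$. The following are equivalent: (1) idempotents can be lifted uniquely weakly modulo $I$; (2) idempotents can be lifted weakly modulo $I$, $R$ is abelian, and $I$ is idempotent free; (3) idempotents can be lifted centrally weakly modulo $I$, and $I$ is idempotent free.
   Context: All rings are associative with identity; $Idem(R)$ is the set of idempotents and $Nil(R)$ the set of nilpotent elements of $R$. Idempotents can be lifted weakly modulo $I$ if for every $x\in R$ with $x^2-x\in I$ there is $e\in Idem(R)$ with $x-e\in I$ or $x+e\in I$; lifted uniquely weakly modulo $I$ if for every such $x$ there is a unique $e\in Idem(R)$ with $x-e\in I$ or $x+e\in I$; lifted centrally weakly modulo $I$ if for every such $x$ there is a central $e\in Idem(R)$ with $x-e\in I$ or $x+e\in I$. An ideal is idempotent free if the only idempotent it contains is $0$. $R$ is abelian if all its idempotents are central. *)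

(* Defs.v *)
From HB Require Import structures.
From mathcomp Require Import all_boot all_algebra.
Set Implicit Arguments. Unset Strict Implicit. Unset Printing Implicit Defensive.
Import GRing.Theory.
Local Open Scope ring_scope.

(* Rings: associative with identity (pzRingType; the zero ring is allowed).
   Subsets of R are Prop-valued predicates. *)

Definition is_ideal (R : pzRingType) (I : R -> Prop) : Prop :=
  [/\ I 0,
      (forall x y, I x -> I y -> I (x - y)),
      (forall r x, I x -> I (r * x)) &
      (forall r x, I x -> I (x * r))].

Definition idem (R : pzRingType) (e : R) : Prop := e * e = e.

Definition nilp (R : pzRingType) (x : R) : Prop := exists n : nat, x ^+ n = 0.

Definition central (R : pzRingType) (e : R) : Prop := forall x : R, e * x = x * e.

Definition nil_sub (R : pzRingType) (I : R -> Prop) : Prop :=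
  forall x : R, nilp x -> I x.

Definition abelian_ring (R : pzRingType) : Prop :=
  forall e : R, idem e -> central e.

Definition idem_free (R : pzRingType) (I : R -> Prop) : Prop :=
  forall e : R, idem e -> I e -> e = 0.

Definition weak_lift_rel (R : pzRingType) (I : R -> Prop) (x e : R) : Prop :=
  I (x - e) \/ I (x + e).

Definition lift_weakly (R : pzRingType) (I : R -> Prop) : Prop :=
  forall x : R, I (x * x - x) ->
    exists e : R, idem e /\ weak_lift_rel I x e.

Definition lift_uniquely_weakly (R : pzRingType) (I : R -> Prop) : Prop :=
  forall x : R, I (x * x - x) ->
    exists! e : R, idem e /\ weak_lift_rel I x e.

Definition lift_centrally_weakly (R : pzRingType) (I : R -> Prop) : Prop :=
  forall x : R, I (x * x - x) ->
    exists e : R, [/\ idem e, central e & weak_lift_rel I x e].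

(* Main.v *)
Require Import Defs.
From mathcomp Require Import all_boot all_algebra.
Import GRing.Theory.
Local Open Scope ring_scope.
Set Implicit Arguments.

Section S.
Variable (R : pzRingType) (I : R -> Prop).
Hypothesis hI : is_ideal I.

Lemma Iadd x y : I x -> I y -> I (x + y).
Proof. case: hI => I0 Is _ _ hx hy. have := Is x (0 - y) hx (Is 0 y I0 hy). by rewrite sub0r opprK. Qed.
Lemma Iopp x : I x -> I (- x).
Proof. case: hI => I0 Is _ _ hx. have := Is 0 x I0 hx. by rewrite sub0r. Qed.
Lemma Il r x : I x -> I (r * x). Proof. by case: hI => _ _ H _; apply: H. Qed.

Lemma idem_sub_mul (e f : R) : idem e -> idem f -> f * e = e * f -> idem (e - e * f).
Proof.
move=> he hf cf; rewrite /idem in he hf *; rewrite mulrBl !mulrBr.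
have efe : e * f * e = e * f by rewrite -mulrA cf mulrA he.
rewrite mulrA he efe mulrA efe -mulrA hf.
by rewrite subrr subr0.
Qed.

Lemma keyL (e f : R) : idem e -> idem f -> central f -> idem_free I ->
  (I (e - f) \/ I (e + f)) -> e = f.
Proof.
move=> he hf cf hfree H.
have he' : e * e = e := he. have hf' : f * f = f := hf.
have g0 : e - e * f = 0.
  apply: hfree; first exact: idem_sub_mul.
  case: H => H.
    have := Il (1 - f) H.
    by rewrite mulrBl !mul1r mulrBr hf' (cf e) opprB addrA subrK.
  have := Il (1 - f) H.
  by rewrite mulrBl !mul1r mulrDr hf' (cf e) opprD addrACA subrr addr0.
have h0 : f - e * f = 0.
  rewrite -(cf e); apply: hfree; first by apply: idem_sub_mul; rewrite ?cf.
  rewrite (cf e).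
  case: H => H.
    have := Il (e - 1) H.
    by rewrite mulrBl !mul1r !mulrBr he' opprB addrC addrA subrK.
  have := Il (1 - e) H.
  by rewrite mulrBl !mul1r mulrDr he' opprD addrACA subrr add0r.
by rewrite (subr0_eq g0) -(subr0_eq h0).
Qed.
End S.

Lemma Isub (R : pzRingType) (I : R -> Prop) (hI : is_ideal I) {x y : R} : I x -> I y -> I (x - y).
Proof. by case: hI => _ H _ _; apply: H. Qed.
Lemma I0 (R : pzRingType) (I : R -> Prop) : is_ideal I -> I 0.
Proof. by case. Qed.

Theorem mainTheorem6 (R : pzRingType) (I : R -> Prop) :
  is_ideal I -> nil_sub I ->
  (lift_uniquely_weakly I <->
     (lift_weakly I /\ abelian_ring R /\ idem_free I)) /\
  ((lift_weakly I /\ abelian_ring R /\ idem_free I) <->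
     (lift_centrally_weakly I /\ idem_free I)).
Proof.
move=> hI hnil.
have K := keyL hI.
split; split.
- move=> Hu; split.
    move=> x hx; case: (Hu x hx) => e [He _]; by exists e.
  split.
    move=> e he r.
    have he' : e * e = e := he.
    have II : I (e * e - e) by rewrite he' subrr; exact: I0.
    have Z : forall a, a * a = 0 -> e * a + a * e = a -> a = 0.
      move=> a aa ea.
      case: (Hu e II) => u [_ U].
      have Iee : I (e - e) by rewrite subrr; exact: I0.
      have U1 := U e (conj he (or_introl Iee)).
      have Ia : I (- a) by apply: Iopp => //; apply: hnil; exists 2%N; rewrite expr2.
      have hf : idem (e + a).
        rewrite /idem mulrDl !mulrDr he' aa addr0 -addrA ea.
        done.
      have U2 := U (e + a) (conj hf (or_introl _)).
      rewrite opprD addrA subrr add0r in U2.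
      have := U2 Ia; rewrite -U1 => /eqP; rewrite -subr_eq0 opprD addrA subrr add0r oppr_eq0.
      by move/eqP.
    have ee : (1 - e) * e = 0 by rewrite mulrBl mul1r he' subrr.
    have ee2 : e * (1 - e) = 0 by rewrite mulrBr mulr1 he' subrr.
    have ae : e * r * (1 - e) * e = 0 by rewrite -mulrA ee mulr0.
    have A1 : e * r * (1 - e) = 0.
      apply: Z; first by rewrite !mulrA ae !mul0r.
      by rewrite ae addr0 !mulrA he'.
    have be : (1 - e) * r * e * (1 - e) = 0 by rewrite -mulrA ee2 mulr0.
    have A2 : (1 - e) * r * e = 0.
      apply: Z; first by rewrite !mulrA be !mul0r.
      by rewrite !mulrA ee2 !mul0r add0r -[(1 - e) * r * e * e]mulrA he'.
    move/eqP: A1; rewrite mulrBr mulr1 subr_eq0 => /eqP ->.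
    by move/eqP: A2; rewrite !mulrBl mul1r subr_eq0 => /eqP ->.
  move=> e he hIe.
  have II : I (0 * 0 - 0) by rewrite mulr0 subrr; exact: I0.
  case: (Hu 0 II) => u [_ U].
  have hz : idem (0 : R) by rewrite /idem mulr0.
  have U0 := U 0 (conj hz (or_introl (Isub hI (I0 hI) (I0 hI)))).
  have Ue := U e (conj he (or_introl (Isub hI (I0 hI) hIe))).
  by rewrite -Ue U0.
- move=> [Hw [Hab Hfree]] x hx.
  case: (Hw x hx) => e [he Hr]; exists e; split=> // e' [he' Hr'].
  apply: K he he' (Hab e' he') Hfree _.
  case: Hr => Hr; case: Hr' => Hr'.
  + left; have := Isub hI Hr' Hr. by rewrite opprB addrC addrA subrK.
  + right; have := Isub hI Hr' Hr. by rewrite opprB addrC addrA subrK addrC.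
  + right; have := Isub hI Hr Hr'. by rewrite opprB addrC addrA subrK addrC.
  + left; have := Isub hI Hr Hr'. by rewrite opprD addrACA subrr add0r.
- move=> [Hw [Hab Hf]]; split=> //.
  move=> x hx; case: (Hw x hx) => e [he Hr]; exists e; split=> //; exact: Hab.
- move=> [Hc Hf]; split.
    move=> x hx; case: (Hc x hx) => e [he _ Hr]; by exists e.
  split=> //.
  move=> e he.
  have II : I (e * e - e) by rewrite he subrr; exact: I0.
  case: (Hc e II) => f [hf cf Hr].
  by rewrite (K e f he hf cf Hf Hr).
Qed.
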